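(* Let $M_1, M_2, N_1, N_2$ be nontrivial permutation groups. Suppose $M_1$ has property (FA), and no nontrivial quotient of $M_1$ is isomorphic to any subgroup of $M_2$ or $N_2$. Then $M_1 \boxtimes N_1$ and $M_2 \boxtimes N_2$ are not (abstractly) isomorphic.
   Context: Box product: let $\Omega$ and $\Delta$ be disjoint sets, each of cardinality at least two, and let $M \leq \mathrm{Sym}(\Omega)$ and $N \leq \mathrm{Sym}(\Delta)$ be nontrivial permutation groups. Let $T$ be the $(|\Omega|,|\Delta|)$-biregular tree, with $V_\Omega$ the part of its bipartition consisting of vertices of valency $|\Omega|$ and $V_\Delta$ the part consisting of vertices of valency $|\Delta|$. For a vertex $v$, $A(v)$ denotes the set of arcs with origin $v$ and $\overline{A}(v)$ the set of arcs with terminus $v$. A legal colouring is a map $c : AT \to \Omega \cup \Delta$ such that $c|_{A(v)} : A(v) \to \Omega$ is a bijection for every $v \in V_\Omega$, $c|_{A(v)} : A(v) \to \Delta$ is a bijection for every $v \in V_\Delta$, and $c|_{\overline{A}(v)}$ has image of cardinality one for every vertex $v$. Define $U(M,N) = \{ g \in (\mathrm{Aut}\, T)_{\{V_\Omega\}} : c|_{A(gv)}\, g|_{A(v)}\, c|_{A(v)}^{-1} \in M \text{ for all } v \in V_\Omega,\ \in N \text{ for all } v \in V_\Delta\}$. The box product $M \boxtimes N$ is the subgroup of $\mathrm{Sym}(V_\Delta)$ induced by $U(M,N)$; up to permutation isomorphism it does not depend on the choice of legal colouring $c$. A group $G$ has Serre's property (FA) if, whenever $G$ acts on a tree without inversion,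 some vertex of the tree is fixed by all elements of $G$. *)

(* Defs.v *)
From Stdlib Require Import List.
Import ListNotations.
Set Implicit Arguments.

Definition comp {X : Type} (g h : X -> X) : X -> X := fun x => g (h x).

Definition bij {X : Type} (f : X -> X) : Prop :=
  (forall x y, f x = f y -> x = y) /\ (forall y, exists x, f x = y).

Definition perm_group {X : Type} (G : (X -> X) -> Prop) : Prop :=
  (forall g, G g -> bij g) /\
  G (fun x => x) /\
  (forall g h, G g -> G h -> G (comp g h)) /\
  (forall g, G g -> exists h, G h /\ comp g h = (fun x => x) /\ comp h g = (fun x => x)).

Definition nontrivial {X : Type} (G : (X -> X) -> Prop) : Prop :=
  exists g, G g /\ g <> (fun x => x).

Definition at_least_two (X : Type) : Prop := exists a b : X, a <> b.

Definition subgroup {X : Type} (H G : (X -> X) -> Prop) : Prop :=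
  (forall g, H g -> G g) /\ perm_group H.

Definition normal_subgroup {X : Type} (K G : (X -> X) -> Prop) : Prop :=
  subgroup K G /\
  (forall g k, G g -> K k -> exists k', K k' /\ comp g k = comp k' g).

Definition group_iso {X Y : Type} (G : (X -> X) -> Prop) (H : (Y -> Y) -> Prop) : Prop :=
  exists phi : (X -> X) -> (Y -> Y),
    (forall g, G g -> H (phi g)) /\
    (forall g h, G g -> G h -> phi (comp g h) = comp (phi g) (phi h)) /\
    (forall g h, G g -> G h -> phi g = phi h -> g = h) /\
    (forall h, H h -> exists g, G g /\ phi g = h).

(* psi : G -> S is constant exactly on the left cosets gK, multiplicative and
   onto S; i.e. psi induces an isomorphism G/K ~= S. *)
Definition quotient_iso_to {X Y : Type} (G K : (X -> X) -> Prop) (S : (Y -> Y) -> Prop) : Prop :=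
  exists psi : (X -> X) -> (Y -> Y),
    (forall g, G g -> S (psi g)) /\
    (forall h, S h -> exists g, G g /\ psi g = h) /\
    (forall g h, G g -> G h -> psi (comp g h) = comp (psi g) (psi h)) /\
    (forall g h, G g -> G h -> (psi g = psi h <-> exists k, K k /\ h = comp g k)).

Definition nontrivial_quotient_embeds {X Y : Type}
  (G : (X -> X) -> Prop) (H : (Y -> Y) -> Prop) : Prop :=
  exists K S, normal_subgroup K G /\ (exists g, G g /\ ~ K g) /\
              subgroup S H /\ quotient_iso_to G K S.

Fixpoint walk {V : Type} (adj : V -> V -> Prop) (u : V) (p : list V) (v : V) : Prop :=
  match p with
  | [] => u = v
  | w :: p' => adj u w /\ walk adj w p' v
  end.

Fixpoint no_backtrack {V : Type} (s : list V) : Prop :=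
  match s with
  | a :: ((b :: c :: _) as t) => a <> c /\ no_backtrack t
  | _ => True
  end.

Definition is_tree {V : Type} (adj : V -> V -> Prop) : Prop :=
  inhabited V /\
  (forall u v, adj u v -> adj v u) /\
  (forall v, ~ adj v v) /\
  (forall u v, exists p, walk adj u p v) /\
  (forall v p, walk adj v p v -> no_backtrack (v :: p) -> p = []).

Definition tree_aut {V : Type} (adj : V -> V -> Prop) (g : V -> V) : Prop :=
  bij g /\ (forall u v, adj u v <-> adj (g u) (g v)).

Definition has_FA {X : Type} (M : (X -> X) -> Prop) : Prop :=
  forall (V : Type) (adj : V -> V -> Prop) (rho : (X -> X) -> V -> V),
    is_tree adj ->
    (forall g, M g -> tree_aut adj (rho g)) ->
    (forall g h, M g -> M h -> rho (comp g h) = comp (rho g) (rho h)) ->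
    (forall g u v, M g -> adj u v -> ~ (rho g u = v /\ rho g v = u)) ->
    exists v, forall g, M g -> rho g v = v.

(* (V, adj) is a tree with bipartition V_Om = inO, V_De = complement, and
   col is a legal colouring of its arcs (arcs = ordered pairs (u,w) with
   adj u w; colours in the disjoint union Om + De).  Existence of the legal
   colouring forces the tree to be the (|Om|,|De|)-biregular tree. *)
Definition legal_box_setup (Om De V : Type) (adj : V -> V -> Prop)
  (inO : V -> Prop) (col : V -> V -> Om + De) : Prop :=
  is_tree adj /\
  (forall u v, adj u v -> (inO u <-> ~ inO v)) /\
  (forall v, inO v ->
     (forall w, adj v w -> exists o, col v w = inl o) /\
     (forall o, exists w, adj v w /\ col v w = inl o) /\
     (forall w w', adj v w -> adj v w' -> col v w = col v w' -> w = w')) /\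
  (forall v, ~ inO v ->
     (forall w, adj v w -> exists d, col v w = inr d) /\
     (forall d, exists w, adj v w /\ col v w = inr d) /\
     (forall w w', adj v w -> adj v w' -> col v w = col v w' -> w = w')) /\
  (forall v u u', adj u v -> adj u' v -> col u v = col u' v).

Definition in_U (Om De V : Type) (adj : V -> V -> Prop) (inO : V -> Prop)
  (col : V -> V -> Om + De) (M : (Om -> Om) -> Prop) (N : (De -> De) -> Prop)
  (g : V -> V) : Prop :=
  tree_aut adj g /\
  (forall v, inO (g v) <-> inO v) /\
  (forall v, inO v -> exists s, M s /\
     forall w o, adj v w -> col v w = inl o -> col (g v) (g w) = inl (s o)) /\
  (forall v, ~ inO v -> exists s, N s /\
     forall w d, adj v w -> col v w = inr d -> col (g v) (g w) = inr (s d)).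

Definition box_product (Om De V : Type) (adj : V -> V -> Prop) (inO : V -> Prop)
  (col : V -> V -> Om + De) (M : (Om -> Om) -> Prop) (N : (De -> De) -> Prop)
  : ({v : V | ~ inO v} -> {v : V | ~ inO v}) -> Prop :=
  fun f => exists g, in_U adj inO col M N g /\
                     forall x, proj1_sig (f x) = g (proj1_sig x).

(* Main.v *)
Require Import Defs.
From Stdlib Require Import List Classical ClassicalEpsilon FunctionalExtensionality ProofIrrelevance Lia.
Import ListNotations.

Section Setup.
Context {Om De V : Type} {adj : V -> V -> Prop} {inO : V -> Prop} {col : V -> V -> Om + De}.
Hypothesis T : legal_box_setup adj inO col.

Lemma L_sym {u v} : adj u v -> adj v u.
Proof. destruct T as [[_ [H _]] _]. apply H. Qed.
Lemma L_bip {u v} : adj u v -> (inO u <-> ~ inO v).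
Proof. destruct T as [_ [H _]]. apply H. Qed.
Lemma L_Oout {v w} : inO v -> adj v w -> exists o, col v w = inl o.
Proof. destruct T as [_ [_ [H _]]]. intros Hv. apply (proj1 (H v Hv)). Qed.
Lemma L_Osurj {v} o : inO v -> exists w, adj v w /\ col v w = inl o.
Proof. destruct T as [_ [_ [H _]]]. intros Hv. apply (proj1 (proj2 (H v Hv))). Qed.
Lemma L_Dout {v w} : ~ inO v -> adj v w -> exists d, col v w = inr d.
Proof. destruct T as [_ [_ [_ [H _]]]]. intros Hv. apply (proj1 (H v Hv)). Qed.
Lemma L_Dsurj {v} d : ~ inO v -> exists w, adj v w /\ col v w = inr d.
Proof. destruct T as [_ [_ [_ [H _]]]]. intros Hv. apply (proj1 (proj2 (H v Hv))). Qed.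
Lemma L_inj {v w w'} : adj v w -> adj v w' -> col v w = col v w' -> w = w'.
Proof. destruct T as [_ [_ [HO [HD _]]]].
  destruct (classic (inO v)) as [Hv|Hv];
  [apply (proj2 (proj2 (HO v Hv))) | apply (proj2 (proj2 (HD v Hv)))]. Qed.
Lemma L_in {v u u'} : adj u v -> adj u' v -> col u v = col u' v.
Proof. destruct T as [_ [_ [_ [_ H]]]]. apply H. Qed.
Lemma L_tree : is_tree adj.
Proof. destruct T as [H _]. exact H. Qed.

Definition tau (s : Om -> Om) (c : Om + De) : Om + De :=
  match c with inl o => inl (s o) | inr d => inr d end.

Definition nb (y : V) (c : Om + De) : V :=
  epsilon (inhabits y) (fun w => adj y w /\ col y w = c).

Lemma nb_spec y c : (exists w, adj y w /\ col y w = c) -> adj y (nb y c) /\ col y (nb y c) = c.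
Proof. intro H. unfold nb. apply (epsilon_spec (inhabits y) (fun w => adj y w /\ col y w = c) H). Qed.

Lemma nb_eq y w c : adj y w -> col y w = c -> nb y c = w.
Proof. intros H1 H2.
  destruct (nb_spec y c (ex_intro (fun w => adj y w /\ col y w = c) w (conj H1 H2))) as [A B].
  apply (L_inj A H1). congruence. Qed.

Definition Rel (s : Om -> Om) (x y : V) : Prop :=
  (inO x <-> inO y) /\ (forall a b, adj a x -> adj b y -> col b y = tau s (col a x)).

Lemma step s x y w : Rel s x y -> adj x w ->
  adj y (nb y (tau s (col x w))) /\ col y (nb y (tau s (col x w))) = tau s (col x w)
  /\ Rel s w (nb y (tau s (col x w))).
Proof.
  intros [HO Hc] Hxw.
  assert (Hex : exists w', adj y w' /\ col y w' = tau s (col x w)).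
  { destruct (classic (inO x)) as [Hx|Hx].
    - destruct (L_Oout Hx Hxw) as [o Ho]. rewrite Ho. simpl.
      apply L_Osurj. tauto.
    - destruct (L_Dout Hx Hxw) as [d Hd]. rewrite Hd. simpl.
      apply L_Dsurj. tauto. }
  destruct (nb_spec _ _ Hex) as [A B].
  split; [exact A|]. split; [exact B|]. split.
  - pose proof (L_bip Hxw). pose proof (L_bip A).
    destruct (classic (inO w)); destruct (classic (inO (nb y (tau s (col x w))))); tauto.
  - intros a b Ha Hb. rewrite (L_in Ha Hxw). rewrite (L_in Hb A). exact B.
Qed.

Lemma back s x y w : Rel s x y -> adj x w ->
  nb (nb y (tau s (col x w))) (tau s (col w x)) = y.
Proof. intros HR Hxw. destruct (step s x y w HR Hxw) as [A [B _]].
  apply nb_eq. apply L_sym; exact A. destruct HR as [_ Hc]. apply Hc.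
  apply L_sym; exact Hxw. apply L_sym; exact A. Qed.

Fixpoint ch (x : V) (p : list V) : Prop :=
  match p with [] => True | w :: p' => adj x w /\ ch w p' end.
Fixpoint lst (x : V) (p : list V) : V :=
  match p with [] => x | w :: p' => lst w p' end.
Fixpoint te s (x y : V) (p : list V) : V :=
  match p with [] => y | w :: p' => te s w (nb y (tau s (col x w))) p' end.
Fixpoint twl s (x y : V) (p : list V) : list V :=
  match p with [] => [] | w :: p' => nb y (tau s (col x w)) :: twl s w (nb y (tau s (col x w))) p' end.
Fixpoint rp (x : V) (p : list V) : list V :=
  match p with [] => [] | w :: p' => rp w p' ++ [x] end.

Lemma walk_ch : forall p x z, walk adj x p z <-> ch x p /\ lst x p = z.
Proof. induction p; simpl; intros; [tauto|]. rewrite IHp. tauto. Qed.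
Lemma ch_app : forall p x q, ch x (p ++ q) <-> ch x p /\ ch (lst x p) q.
Proof. induction p; simpl; intros; [tauto|]. rewrite IHp. tauto. Qed.
Lemma lst_app : forall p x q, lst x (p ++ q) = lst (lst x p) q.
Proof. induction p; simpl; auto. Qed.
Lemma te_app : forall p s x y q, te s x y (p ++ q) = te s (lst x p) (te s x y p) q.
Proof. induction p; simpl; auto. Qed.
Lemma te_R : forall p s x y, Rel s x y -> ch x p -> Rel s (lst x p) (te s x y p).
Proof. induction p; simpl; intros s x y HR Hc; auto.
  destruct Hc as [Ha Hc]. apply IHp; auto. apply (step s x y a HR Ha). Qed.
Lemma lst_rp : forall p x, lst (lst x p) (rp x p) = x.
Proof. induction p; simpl; intros x; auto. rewrite lst_app, IHp. reflexivity. Qed.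
Lemma ch_rp : forall p x, ch x p -> ch (lst x p) (rp x p).
Proof. induction p; simpl; intros x Hc; auto. destruct Hc as [Ha Hc].
  apply ch_app. split; auto. rewrite lst_rp. simpl. split; auto. apply L_sym; auto. Qed.

Lemma te_rev : forall p s x y, Rel s x y -> ch x p -> te s (lst x p) (te s x y p) (rp x p) = y.
Proof. induction p as [|w p IH]; simpl; intros s x y HR Hc; auto. destruct Hc as [Ha Hc].
  rewrite te_app. rewrite IH; auto. rewrite lst_rp. simpl. apply back; auto.
  apply (step s x y w HR Ha). Qed.

Lemma te_inj p s x y y' : Rel s x y -> Rel s x y' -> ch x p -> te s x y p = te s x y' p -> y = y'.
Proof. intros H1 H2 Hc E.
  transitivity (te s (lst x p) (te s x y p) (rp x p)); [symmetry; apply te_rev; auto|].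
  rewrite E. apply te_rev; auto. Qed.

Lemma rm0 s x y b r : Rel s x y -> ch x (b :: x :: r) -> te s x y (b :: x :: r) = te s x y r.
Proof. intros HR [Hb _]. simpl. rewrite (back s x y b HR Hb). reflexivity. Qed.

Lemma rm : forall q s x y a b r, Rel s x y -> ch x (q ++ a :: b :: a :: r) ->
  te s x y (q ++ a :: b :: a :: r) = te s x y (q ++ a :: r).
Proof. induction q as [|c q IH]; simpl; intros s x y a b r HR Hc.
  - destruct Hc as [Hxa [Hab _]]. rewrite (back s a _ b); auto. apply (step s x y a HR Hxa).
  - destruct Hc as [Hxc Hc]. apply IH; auto. apply (step s x y c HR Hxc). Qed.

Lemma ch_rm : forall q x a b r, ch x (q ++ a :: b :: a :: r) -> ch x (q ++ a :: r).
Proof. induction q; simpl; intros; [tauto|]. destruct H; split; eauto. Qed.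
Lemma lst_rm : forall q x a b r, lst x (q ++ a :: b :: a :: r) = lst x (q ++ a :: r).
Proof. induction q; simpl; auto. Qed.

Lemma dec : forall (p : list V) (x : V), ~ no_backtrack (x :: p) ->
  (exists b r, p = b :: x :: r) \/ (exists q a b r, p = q ++ a :: b :: a :: r).
Proof.
  induction p as [|w p IH]; intros x H.
  - simpl in H. contradiction (H I).
  - destruct p as [|c p'].
    + simpl in H. contradiction (H I).
    + simpl in H. destruct (classic (x = c)) as [E|E].
      * subst. left. eauto.
      * right. destruct (IH w) as [[b [r E']]|[q [a [b [r E']]]]].
        { intro Hn. apply H. split; auto. }
        -- exists [], w, b, r. rewrite E'. reflexivity.
        -- exists (w :: q), a, b, r. rewrite E'. reflexivity.
Qed.

Lemma closed : forall n p s x y, length p <= n -> Rel s x y -> ch x p -> lst x p = x -> te s x y p = y.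
Proof.
  induction n; intros p s x y Hl HR Hc Hlst.
  - destruct p; [reflexivity | simpl in Hl; lia].
  - destruct (classic (no_backtrack (x :: p))) as [Hn|Hn].
    + assert (p = []) as ->.
      { destruct L_tree as [_ [_ [_ [_ Hac]]]]. apply (Hac x p); auto. apply walk_ch; auto. }
      reflexivity.
    + destruct (dec p x Hn) as [[b [r E]]|[q [a [b [r E]]]]]; subst p.
      * rewrite rm0 by auto. apply IHn; auto. simpl in Hl; lia. simpl in Hc; tauto.
      * rewrite rm by auto. apply IHn; auto.
        -- rewrite length_app in *; simpl in *; lia.
        -- apply (ch_rm _ _ _ b); auto.
        -- rewrite <- (lst_rm _ _ _ b); auto.
Qed.

Lemma tau_id c : tau (fun o => o) c = c.
Proof. destruct c; reflexivity. Qed.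
Lemma tau_comp s t c : tau s (tau t c) = tau (comp s t) c.
Proof. destruct c; reflexivity. Qed.

Lemma te_id : forall p x, ch x p -> te (fun o => o) x x p = lst x p.
Proof. induction p; simpl; intros x Hc; auto. destruct Hc as [Ha Hc].
  rewrite tau_id, (nb_eq x a _ Ha eq_refl). apply IHp; auto. Qed.

Lemma twl_ch : forall p s x y, Rel s x y -> ch x p -> ch y (twl s x y p).
Proof. induction p; simpl; intros s x y HR Hc; auto. destruct Hc as [Ha Hc].
  destruct (step s x y a HR Ha) as [A [_ C]]. split; auto. Qed.
Lemma twl_lst : forall p s x y, lst y (twl s x y p) = te s x y p.
Proof. induction p; simpl; auto. Qed.
Lemma twl_te : forall p s t x y z, Rel t x y -> ch x p ->
  te s y z (twl t x y p) = te (comp s t) x z p.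
Proof. induction p; simpl; intros s t x y z HR Hc; auto. destruct Hc as [Ha Hc].
  destruct (step t x y a HR Ha) as [_ [B C]]. rewrite B, tau_comp. apply IHp; auto. Qed.

Variable v0 : V.
Hypothesis Hv0 : inO v0.

Definition Phi s x y := exists p, ch v0 p /\ lst v0 p = x /\ te s v0 v0 p = y.

Lemma Rel_v0 s : Rel s v0 v0.
Proof. split; [tauto|]. intros a b Ha Hb. rewrite (L_in Hb Ha).
  assert (~ inO a) as Hna by (pose proof (L_bip Ha); tauto).
  destruct (L_Dout Hna Ha) as [d Hd]. rewrite Hd. reflexivity. Qed.

Lemma Phi_fun s x y1 y2 : Phi s x y1 -> Phi s x y2 -> y1 = y2.
Proof.
  intros [p1 [C1 [L1 E1]]] [p2 [C2 [L2 E2]]].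
  assert (Hcl : te s v0 v0 (p1 ++ rp v0 p2) = v0).
  { apply (closed (length (p1 ++ rp v0 p2))); auto. apply Rel_v0.
    apply ch_app; split; auto. rewrite L1, <- L2. apply ch_rp; auto.
    rewrite lst_app, L1, <- L2, lst_rp. reflexivity. }
  rewrite te_app, L1, E1 in Hcl.
  assert (H2 : te s x y2 (rp v0 p2) = v0).
  { rewrite <- L2, <- E2. apply te_rev; auto. apply Rel_v0. }
  apply (te_inj (rp v0 p2) s x).
  - rewrite <- L1, <- E1. apply te_R; auto. apply Rel_v0.
  - rewrite <- L2, <- E2. apply te_R; auto. apply Rel_v0.
  - rewrite <- L2. apply ch_rp; auto.
  - congruence.
Qed.

Lemma walk_from_v0 x : exists p, ch v0 p /\ lst v0 p = x.
Proof. destruct L_tree as [_ [_ [_ [Hc _]]]]. destruct (Hc v0 x) as [p Hp].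
  exists p. apply walk_ch; auto. Qed.

Definition g s x := epsilon (inhabits x) (Phi s x).

Lemma g_spec s x : Phi s x (g s x).
Proof. destruct (walk_from_v0 x) as [p [C L]]. unfold g. apply epsilon_spec.
  exists (te s v0 v0 p). exists p. auto. Qed.
Lemma g_eq s x y : Phi s x y -> g s x = y.
Proof. intro H. exact (Phi_fun s x _ _ (g_spec s x) H). Qed.
Lemma g_Rel s x : Rel s x (g s x).
Proof. destruct (g_spec s x) as [p [C [L E]]]. rewrite <- E, <- L. apply te_R; auto. apply Rel_v0. Qed.
Lemma g_adj s x z : adj x z -> g s z = nb (g s x) (tau s (col x z)).
Proof. intro H. destruct (g_spec s x) as [p [C [L E]]]. apply g_eq. exists (p ++ [z]).
  split; [|split].
  - apply ch_app. split; auto. rewrite L. simpl. auto.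
  - rewrite lst_app. reflexivity.
  - rewrite te_app, L, E. reflexivity. Qed.
Lemma g_v0 s : g s v0 = v0.
Proof. apply g_eq. exists []. simpl. auto. Qed.
Lemma g_id x : g (fun o => o) x = x.
Proof. destruct (walk_from_v0 x) as [p [C L]]. apply g_eq. exists p. split; auto. split; auto.
  rewrite te_id; auto. Qed.
Lemma g_comp s t x : g s (g t x) = g (comp s t) x.
Proof. destruct (g_spec t x) as [p [C [L E]]].
  rewrite (g_eq (comp s t) x (te (comp s t) v0 v0 p)).
  - apply g_eq. exists (twl t v0 v0 p). split; [|split].
    + apply twl_ch; auto. apply Rel_v0.
    + rewrite twl_lst. auto.
    + apply twl_te; auto. apply Rel_v0.
  - exists p. auto. Qed.
Lemma g_adj_fwd s u v : adj u v -> adj (g s u) (g s v).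
Proof. intro H. rewrite (g_adj s u v H). apply (step s u (g s u) v (g_Rel s u) H). Qed.
Lemma g_notO s v : ~ inO v -> ~ inO (g s v).
Proof. destruct (g_Rel s v) as [H _]. tauto. Qed.

Lemma g_inU (M : (Om -> Om) -> Prop) (N : (De -> De) -> Prop) s s' :
  comp s' s = (fun o => o) -> comp s s' = (fun o => o) -> M s -> N (fun d => d) ->
  in_U adj inO col M N (g s).
Proof.
  intros E1 E2 Hs HN.
  assert (Hi1 : forall x, g s' (g s x) = x) by (intro; rewrite g_comp, E1; apply g_id).
  assert (Hi2 : forall x, g s (g s' x) = x) by (intro; rewrite g_comp, E2; apply g_id).
  split; [|split; [|split]].
  - split; [split|].
    + intros x y Hxy. rewrite <- (Hi1 x), <- (Hi1 y), Hxy. reflexivity.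
    + intro y. exists (g s' y). apply Hi2.
    + intros u v. split; [apply g_adj_fwd|]. intro H.
      rewrite <- (Hi1 u), <- (Hi1 v). apply g_adj_fwd; auto.
  - intro v. destruct (g_Rel s v) as [H _]. tauto.
  - intros v Hv. exists s. split; auto. intros w o Ha Hc. rewrite (g_adj s v w Ha).
    destruct (step s v (g s v) w (g_Rel s v) Ha) as [_ [B _]]. rewrite B, Hc. reflexivity.
  - intros v Hv. exists (fun d => d). split; auto. intros w d Ha Hc. rewrite (g_adj s v w Ha).
    destruct (step s v (g s v) w (g_Rel s v) Ha) as [_ [B _]]. rewrite B, Hc. reflexivity.
Qed.

Lemma sub_eq' (a b : {v : V | ~ inO v}) : proj1_sig a = proj1_sig b -> a = b.
Proof. destruct a, b; simpl; intro; subst; f_equal; apply proof_irrelevance. Qed.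

Definition gres s (x : {v : V | ~ inO v}) : {v : V | ~ inO v} :=
  exist _ (g s (proj1_sig x)) (g_notO s _ (proj2_sig x)).

Lemma gres_in (M : (Om -> Om) -> Prop) (N : (De -> De) -> Prop) s s' :
  comp s' s = (fun o => o) -> comp s s' = (fun o => o) -> M s -> N (fun d => d) ->
  box_product adj inO col M N (gres s).
Proof. intros. exists (g s). split; [apply (g_inU M N s s'); auto| intro; reflexivity]. Qed.
Lemma gres_comp s t : gres (comp s t) = comp (gres s) (gres t).
Proof. extensionality x. apply sub_eq'. simpl. symmetry. apply g_comp. Qed.
Lemma gres_id : gres (fun o => o) = (fun x => x).
Proof. extensionality x. apply sub_eq'. simpl. apply g_id. Qed.
Lemma gres_trivial s : gres s = (fun x => x) -> forall o, s o = o.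
Proof. intros E o. destruct (L_Osurj o Hv0) as [w [Hw Cw]].
  assert (Hwn : ~ inO w) by (pose proof (L_bip Hw); tauto).
  assert (Eg : g s w = w) by exact (f_equal (@proj1_sig _ _) (equal_f E (exist _ w Hwn))).
  pose proof (g_adj s v0 w Hw) as K. rewrite g_v0 in K.
  destruct (step s v0 v0 w (Rel_v0 s) Hw) as [_ [B _]]. rewrite <- K, Eg, Cw in B.
  simpl in B. congruence. Qed.

End Setup.

Lemma noembed_trivial {X Y : Type} (M : (X->X)->Prop) (L : (Y->Y)->Prop) (psi : (X->X)->(Y->Y)) :
  perm_group M -> perm_group L -> (forall g, M g -> L (psi g)) ->
  (forall g h, M g -> M h -> psi (comp g h) = comp (psi g) (psi h)) ->
  ~ nontrivial_quotient_embeds M L -> forall g, M g -> psi g = (fun y => y).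
Proof.
  intros pM pL HL Hh nq.
  destruct pM as [Mbij [Mid [Mc Minv]]].
  destruct pL as [Lbij [Lid [Lc Linv]]].
  assert (Hid : psi (fun x => x) = (fun y => y)).
  { pose proof (Hh _ _ Mid Mid) as E. change (comp (fun x:X => x) (fun x => x)) with (fun x:X => x) in E.
    destruct (Lbij _ (HL _ Mid)) as [inj _]. extensionality y. apply inj.
    symmetry. exact (equal_f E y). }
  assert (Hinv : forall g h, M g -> M h -> comp g h = (fun x => x) -> comp (psi g) (psi h) = (fun y => y)).
  { intros a b Ha Hb E. rewrite <- (Hh a b Ha Hb), E. exact Hid. }
  intros g Hg. apply NNPP. intro Hne. apply nq.
  exists (fun k => M k /\ psi k = (fun y => y)), (fun s => exists g, M g /\ psi g = s).
  split; [|split; [|split]].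
  - split.
    + split. { intros k [Hk _]; exact Hk. }
      split; [|split;[|split]].
      * intros k [Hk _]; apply Mbij; auto.
      * split; auto.
      * intros a b [Ha Ea] [Hb Eb]. split; auto. rewrite Hh, Ea, Eb by auto. reflexivity.
      * intros a [Ha Ea]. destruct (Minv a Ha) as [b [Hb [E1 E2]]]. exists b.
        split; [split; auto| auto]. pose proof (Hinv a b Ha Hb E1) as K. rewrite Ea in K. exact K.
    + intros a k Ha [Hk Ek]. destruct (Minv a Ha) as [b [Hb [E1 E2]]].
      exists (comp a (comp k b)). split.
      * split. { apply Mc; auto. } rewrite Hh, Hh, Ek by auto. exact (Hinv a b Ha Hb E1).
      * extensionality x. unfold comp. pose proof (equal_f E2 x) as K. unfold comp in K.
        rewrite K. reflexivity.
  - exists g; split; auto. intros [_ E]; contradiction.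
  - split. { intros s [a [Ha Ea]]; subst; auto. }
    split; [|split;[|split]].
    * intros s [a [Ha Ea]]; subst; apply Lbij; auto.
    * exists (fun x => x); split; auto.
    * intros s t [a [Ha Ea]] [b [Hb Eb]]; subst. exists (comp a b); split; auto.
    * intros s [a [Ha Ea]]; subst. destruct (Minv a Ha) as [b [Hb [E1 E2]]].
      exists (psi b). split; [exists b; auto|]. split; apply Hinv; auto.
  - exists psi. split; [|split;[|split]].
    * intros a Ha; exists a; auto.
    * intros s [a [Ha Ea]]; exists a; auto.
    * exact Hh.
    * intros a b Ha Hb. split.
      + intro E. destruct (Minv a Ha) as [a' [Ha' [E1 E2]]]. exists (comp a' b). split.
        { split. { apply Mc; auto. } rewrite Hh by auto. rewrite <- E. apply Hinv; auto. }
        extensionality x. unfold comp. pose proof (equal_f E1 (b x)) as K. unfold comp in K.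
        rewrite K. reflexivity.
      + intros [k [[Hk Ek] E]]. subst b. rewrite Hh by auto. rewrite Ek. reflexivity.
Qed.

Lemma agree_all {Om De V : Type} {adj : V -> V -> Prop} {inO : V -> Prop} {col : V -> V -> Om + De}
  (T : legal_box_setup adj inO col) : at_least_two Om ->
  forall f h, tree_aut adj f -> tree_aut adj h -> (forall v, ~ inO v -> f v = h v) -> forall v, f v = h v.
Proof.
  intros hO f h [[fi fs] fa] [[hi hs] ha] Hag v.
  destruct (classic (inO v)) as [Hv|Hv]; [|auto].
  destruct hO as [o1 [o2 Hne]].
  destruct (L_Osurj T o1 Hv) as [a [Ha Ca]]. destruct (L_Osurj T o2 Hv) as [b [Hb Cb]].
  assert (Hab : a <> b) by (intro; subst; congruence).
  assert (Hna : ~ inO a) by (pose proof (L_bip T Ha); tauto).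
  assert (Hnb : ~ inO b) by (pose proof (L_bip T Hb); tauto).
  apply NNPP; intro Hne'.
  destruct (L_tree T) as [_ [_ [_ [_ Hac]]]].
  assert (Hw : walk adj (f v) [h a; h v; h b; f v] (f v)).
  { simpl. repeat split. all: try reflexivity.
    - rewrite <- (Hag a Hna). exact (proj1 (fa v a) Ha).
    - apply (L_sym T). exact (proj1 (ha v a) Ha).
    - exact (proj1 (ha v b) Hb).
    - rewrite <- (Hag b Hnb). apply (L_sym T). exact (proj1 (fa v b) Hb). }
  assert (Hnbk : no_backtrack [f v; h a; h v; h b; f v]).
  { simpl. repeat split; auto. }
  specialize (Hac _ _ Hw Hnbk). discriminate.
Qed.

Lemma taut_comp {V : Type} (adj : V -> V -> Prop) f h :
  tree_aut adj f -> tree_aut adj h -> tree_aut adj (comp f h).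
Proof.
  intros [[fi fs] fa] [[hi hs] ha]. split; [split|].
  - intros x y E. apply hi, fi, E.
  - intro y. destruct (fs y) as [x Hx]. destruct (hs x) as [z Hz]. exists z. unfold comp. congruence.
  - intros u v. unfold comp. rewrite (ha u v). apply fa.
Qed.

Lemma local_fix {Om De V X C : Type} {adj : V -> V -> Prop} {inO : V -> Prop} {col : V -> V -> Om + De}
  (T : legal_box_setup adj inO col)
  (M : (X -> X) -> Prop) (L : (C -> C) -> Prop) (iota : C -> Om + De) (rho : (X -> X) -> V -> V) (u : V) :
  perm_group M -> perm_group L -> ~ nontrivial_quotient_embeds M L ->
  (forall c c', iota c = iota c' -> c = c') ->
  (forall w, adj u w -> exists c, col u w = iota c) ->
  (forall c, exists w, adj u w /\ col u w = iota c) ->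
  (forall g, M g -> tree_aut adj (rho g)) ->
  (forall g h, M g -> M h -> rho (comp g h) = comp (rho g) (rho h)) ->
  (forall g, M g -> rho g u = u) ->
  (forall g, M g -> exists s, L s /\ forall w c, adj u w -> col u w = iota c -> col (rho g u) (rho g w) = iota (s c)) ->
  forall g w, M g -> adj u w -> rho g w = w.
Proof.
  intros pM pL nq Hi Hout Hsurj Ht Hh Hf Hloc.
  set (Q := fun g (s : C -> C) => L s /\ forall w c, adj u w -> col u w = iota c -> col u (rho g w) = iota (s c)).
  set (psi := fun g => epsilon (inhabits (fun c : C => c)) (Q g)).
  assert (Hpsi : forall g, M g -> Q g (psi g)).
  { intros g Hg. apply epsilon_spec. destruct (Hloc g Hg) as [s [Hs Hs']]. exists s. split; auto.
    intros w c H1 H2. pose proof (Hs' w c H1 H2) as K. rewrite (Hf g Hg) in K. exact K. }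
  assert (Hdet : forall g, M g -> forall w c, adj u w -> col u w = iota c ->
            col u (rho g w) = iota (psi g c) /\ adj u (rho g w)).
  { intros g Hg w c H1 H2. split. { apply (proj2 (Hpsi g Hg)); auto. }
    destruct (Ht g Hg) as [_ Ha]. pose proof (proj1 (Ha u w) H1) as K. rewrite (Hf g Hg) in K. exact K. }
  assert (Hhp : forall g h, M g -> M h -> psi (comp g h) = comp (psi g) (psi h)).
  { intros g h Hg Hh'. extensionality c. destruct (Hsurj c) as [w [Hw Cw]].
    assert (Mgh : M (comp g h)) by (destruct pM as [_ [_ [Hc _]]]; auto).
    destruct (Hdet _ Mgh w c Hw Cw) as [K1 _].
    rewrite (Hh g h Hg Hh') in K1. unfold comp in K1.
    destruct (Hdet h Hh' w c Hw Cw) as [K2 A2].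
    destruct (Hdet g Hg _ _ A2 K2) as [K3 _].
    rewrite K1 in K3. apply Hi in K3. unfold comp. exact K3. }
  assert (Htriv := noembed_trivial M L psi pM pL (fun g Hg => proj1 (Hpsi g Hg)) Hhp nq).
  intros g w Hg Hw. destruct (Hout w Hw) as [c Cw]. destruct (Hdet g Hg w c Hw Cw) as [K A].
  rewrite (Htriv g Hg) in K. apply (L_inj T A Hw). rewrite K, Cw. reflexivity.
Qed.

Lemma sub_eq {V : Type} (P : V -> Prop) (a b : {v : V | P v}) : proj1_sig a = proj1_sig b -> a = b.
Proof. destruct a, b; simpl; intro; subst; f_equal; apply proof_irrelevance. Qed.

Theorem lemma7p3
  (Om1 De1 Om2 De2 : Type)
  (M1 : (Om1 -> Om1) -> Prop) (N1 : (De1 -> De1) -> Prop)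
  (M2 : (Om2 -> Om2) -> Prop) (N2 : (De2 -> De2) -> Prop)
  (hO1 : at_least_two Om1) (hD1 : at_least_two De1)
  (hO2 : at_least_two Om2) (hD2 : at_least_two De2)
  (pM1 : perm_group M1) (pN1 : perm_group N1)
  (pM2 : perm_group M2) (pN2 : perm_group N2)
  (ntM1 : nontrivial M1) (ntN1 : nontrivial N1)
  (ntM2 : nontrivial M2) (ntN2 : nontrivial N2)
  (FA1 : has_FA M1)
  (qM2 : ~ nontrivial_quotient_embeds M1 M2)
  (qN2 : ~ nontrivial_quotient_embeds M1 N2)
  (V1 : Type) (adj1 : V1 -> V1 -> Prop) (inO1 : V1 -> Prop) (col1 : V1 -> V1 -> Om1 + De1)
  (T1 : legal_box_setup adj1 inO1 col1)
  (V2 : Type) (adj2 : V2 -> V2 -> Prop) (inO2 : V2 -> Prop) (col2 : V2 -> V2 -> Om2 + De2)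
  (T2 : legal_box_setup adj2 inO2 col2) :
  ~ group_iso (box_product adj1 inO1 col1 M1 N1) (box_product adj2 inO2 col2 M2 N2).
Proof.
  intros [phi [Hin [Hhom [Hinj Hsurj]]]].
  assert (Hv0 : exists v0, inO1 v0).
  { destruct (L_tree T1) as [[x] _]. destruct (classic (inO1 x)) as [Hx|Hx]; [eauto|].
    destruct hD1 as [d _]. destruct (L_Dsurj T1 d Hx) as [w [Hw _]]. exists w.
    pose proof (L_bip T1 Hw). destruct (classic (inO1 w)); tauto. }
  destruct Hv0 as [v0 Hv0].
  set (F := gres T1 v0 Hv0).
  destruct pM1 as [Mbij [Mid [Mc Minv]]] eqn:EpM1.
  assert (F_in : forall s, M1 s -> box_product adj1 inO1 col1 M1 N1 (F s)).
  { intros s Hs. destruct (Minv s Hs) as [s' [Hs' [E1 E2]]].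
    apply (gres_in T1 v0 Hv0 M1 N1 s s'); auto. destruct pN1 as [_ [HN _]]; exact HN. }
  set (P := fun s (h : V2 -> V2) => in_U adj2 inO2 col2 M2 N2 h /\
              forall x, proj1_sig (phi (F s) x) = h (proj1_sig x)).
  set (rho := fun s => epsilon (inhabits (fun v : V2 => v)) (P s)).
  assert (Hrho : forall s, M1 s -> P s (rho s)).
  { intros s Hs. apply epsilon_spec. destruct (Hin _ (F_in s Hs)) as [h Hh]. exists h. exact Hh. }
  assert (Hrhom : forall s t, M1 s -> M1 t -> rho (comp s t) = comp (rho s) (rho t)).
  { intros s t Hs Ht. extensionality v. apply (agree_all T2 hO2).
    - exact (proj1 (proj1 (Hrho _ (Mc s t Hs Ht)))).
    - apply taut_comp; [exact (proj1 (proj1 (Hrho _ Hs))) | exact (proj1 (proj1 (Hrho _ Ht)))].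
    - intros w Hw. pose (x := exist (fun v => ~ inO2 v) w Hw).
      transitivity (proj1_sig (phi (F (comp s t)) x)); [symmetry; apply (proj2 (Hrho _ (Mc s t Hs Ht)))|].
      unfold F. rewrite gres_comp. fold F. rewrite Hhom by (apply F_in; auto).
      unfold comp at 1. rewrite (proj2 (Hrho s Hs)). rewrite (proj2 (Hrho t Ht)). reflexivity. }
  destruct (FA1 V2 adj2 rho (L_tree T2) (fun g Hg => proj1 (proj1 (Hrho g Hg))) Hrhom) as [w Hw].
  { intros g u v Hg Huv [E1 E2]. pose proof (proj1 (proj2 (proj1 (Hrho g Hg))) u) as K.
    rewrite E1 in K. pose proof (L_bip T2 Huv). destruct (classic (inO2 u)); tauto. }
  assert (Hall : forall x s, M1 s -> rho s x = x).
  { intro x. destruct (L_tree T2) as [_ [_ [_ [Hc _]]]]. destruct (Hc w x) as [p Hp].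
    revert w Hw Hp. induction p as [|a p IH]; intros u Hu Hp.
    - simpl in Hp. subst. exact Hu.
    - destruct Hp as [Hua Hp]. apply (IH a); auto.
      assert (Hfix : forall s, M1 s -> rho s a = a).
      { destruct (classic (inO2 u)) as [HuO|HuO].
        - intros s Hs. apply (local_fix T2 M1 M2 (@inl Om2 De2) rho u pM1 pM2 qM2); auto.
          + intros c c' E. injection E; auto.
          + intros w' Hw'. apply (L_Oout T2 HuO Hw').
          + intro c. apply (L_Osurj T2 c HuO).
          + intros g Hg. exact (proj1 (proj1 (Hrho g Hg))).
          + intros g Hg. destruct (Hrho g Hg) as [[_ [_ [HO _]]] _]. apply HO; auto.
        - intros s Hs. apply (local_fix T2 M1 N2 (@inr Om2 De2) rho u pM1 pN2 qN2); auto.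
          + intros c c' E. injection E; auto.
          + intros w' Hw'. apply (L_Dout T2 HuO Hw').
          + intro c. apply (L_Dsurj T2 c HuO).
          + intros g Hg. exact (proj1 (proj1 (Hrho g Hg))).
          + intros g Hg. destruct (Hrho g Hg) as [[_ [_ [_ HD]]] _]. apply HD; auto. }
      exact Hfix. }
  assert (Hphi : forall s, M1 s -> phi (F s) = (fun x => x)).
  { intros s Hs. extensionality x. apply sub_eq. rewrite (proj2 (Hrho s Hs)). apply Hall; auto. }
  destruct ntM1 as [s [Hs Hne]]. apply Hne.
  assert (E : F s = F (fun o => o)).
  { apply Hinj; try (apply F_in; auto). rewrite (Hphi s Hs), (Hphi _ Mid). reflexivity. }
  unfold F in E. rewrite gres_id in E.
  extensionality o. exact (gres_trivial T1 v0 Hv0 s E o).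
Qed.
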